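(* Let $a,b>0$, $c=a+b$, and $F(x)=F(a,b;c;x)$ for $|x|<1$. Then (1) $\log F(x)$ is convex on $(0,1)$; (2) $t\mapsto\log F(1-e^{-t})$ is concave on $(0,\infty)$; (3) $t\mapsto F(1-e^{-t})$ is convex on $(0,\infty)$. In particular, $$F\Big(\frac{x+y}{2}\Big)\le\sqrt{F(x)F(y)}\le F\big(1-\sqrt{(1-x)(1-y)}\big)\le\frac{F(x)+F(y)}{2}$$ for all $x,y\in(0,1)$, with equality if and only if $x=y$.
   Context: $F(a,b;c;x)=\sum_{n=0}^\infty\frac{(a,n)(b,n)}{(c,n)\,n!}x^n$ for $|x|<1$ is the Gaussian hypergeometric function, where $(a,0)=1$ and $(a,n)=a(a+1)\cdots(a+n-1)$ for $n\ge1$. *)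

(* Defs.v *)
From Stdlib Require Import Reals.
From Coquelicot Require Import Coquelicot.
Open Scope R_scope.

Fixpoint poch (a : R) (n : nat) : R :=
  match n with
  | O => 1
  | S m => poch a m * (a + INR m)
  end.

(* Gaussian hypergeometric function F(a,b;c;x) = sum_n (a,n)(b,n)/((c,n) n!) x^n,
   as a Coquelicot series (meaningful for |x| < 1, where it converges). *)
Definition hyp2F1 (a b c x : R) : R :=
  Series (fun n => poch a n * poch b n / (poch c n * INR (Factorial.fact n)) * x ^ n).

Definition convex_on (f : R -> R) (lo hi : Rbar) : Prop :=
  forall x y t, Rbar_lt lo x -> Rbar_lt x hi -> Rbar_lt lo y -> Rbar_lt y hi ->
    0 <= t <= 1 ->
    f (t * x + (1 - t) * y) <= t * f x + (1 - t) * f y.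

Definition concave_on (f : R -> R) (lo hi : Rbar) : Prop :=
  forall x y t, Rbar_lt lo x -> Rbar_lt x hi -> Rbar_lt lo y -> Rbar_lt y hi ->
    0 <= t <= 1 ->
    t * f x + (1 - t) * f y <= f (t * x + (1 - t) * y).

(* Main.v *)
Require Import Defs.
From Stdlib Require Import Reals Lra Lia Psatz.
From Coquelicot Require Import Coquelicot.
Open Scope R_scope.


Lemma psum_lim a x : ex_pseries a x -> is_lim_seq (fun N => sum_f_R0 (fun n => a n * x ^ n) N) (PSeries a x).
Proof.
  intros H. apply PSeries_correct in H. apply is_pseries_Reals in H.
  apply is_lim_seq_Reals. exact H.
Qed.

Lemma sum_lin (rho beta : nat -> R) (r xp yp x y : R) M :
  sum_f_R0 (fun i => beta i * (r - rho i) * (xp * y ^ i - yp * x ^ i)) M =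
  r * xp * sum_f_R0 (fun n => beta n * y ^ n) M - r * yp * sum_f_R0 (fun n => beta n * x ^ n) M
  - xp * sum_f_R0 (fun n => rho n * beta n * y ^ n) M + yp * sum_f_R0 (fun n => rho n * beta n * x ^ n) M.
Proof. induction M; simpl; [ring | rewrite IHM; ring]. Qed.

Lemma pow_cross x y i N : 0 <= x -> x < y -> (i <= N)%nat -> x ^ N * y ^ i <= y ^ N * x ^ i.
Proof.
  intros hx hxy hi. replace N with (i + (N - i))%nat by lia.
  rewrite !pow_add.
  assert (0 <= x ^ i) by (apply pow_le; lra).
  assert (0 <= y ^ i) by (apply pow_le; lra).
  assert (x ^ (N - i) <= y ^ (N - i)) by (apply pow_incr; lra).
  assert (0 <= x ^ i * y ^ i) by (apply Rmult_le_pos; auto).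
  nra.
Qed.

Lemma rho_mono (rho : nat -> R) : (forall n, rho n <= rho (S n)) -> forall i j, (i <= j)%nat -> rho i <= rho j.
Proof.
  intros H i j hij. induction hij; [lra|]. specialize (H m). lra.
Qed.

Lemma ratio_lemma (rho beta : nat -> R) x y :
  (forall n, 0 < beta n) -> (forall n, rho n <= rho (S n)) -> rho 0%nat < rho 1%nat ->
  0 <= x -> x < y ->
  ex_pseries beta x -> ex_pseries beta y ->
  ex_pseries (fun n => rho n * beta n) x -> ex_pseries (fun n => rho n * beta n) y ->
  PSeries (fun n => rho n * beta n) x * PSeries beta y < PSeries (fun n => rho n * beta n) y * PSeries beta x.
Proof.
  intros hb hr hr01 hx hxy e1 e2 e3 e4.
  set (Sa := fun z N => sum_f_R0 (fun n => rho n * beta n * z ^ n) N).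
  set (Sb := fun z N => sum_f_R0 (fun n => beta n * z ^ n) N).
  set (D := fun N => Sa x N * Sb y N - Sa y N * Sb x N).
  assert (step : forall N, D (S N) <= D N).
  { intros N. unfold D, Sa, Sb. rewrite !tech5.
    set (r := rho (S N)). set (bb := beta (S N)).
    assert (Hs := sum_lin rho beta r (x ^ S N) (y ^ S N) x y N).
    assert (Hle : sum_f_R0 (fun i => beta i * (r - rho i) * (x ^ S N * y ^ i - y ^ S N * x ^ i)) N <= sum_f_R0 (fun _ => 0) N).
    { apply sum_Rle. intros i hi.
      assert (0 <= r - rho i) by (assert (H := rho_mono rho hr i (S N) ltac:(lia)); unfold r; lra).
      assert (x ^ S N * y ^ i <= y ^ S N * x ^ i) by (apply pow_cross; auto).
      assert (0 < beta i) by auto.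
      assert (0 <= beta i * (r - rho i)) by (apply Rmult_le_pos; lra).
      nra. }
    rewrite sum_cte, Rmult_0_l in Hle. rewrite Hs in Hle.
    assert (0 < bb) by (unfold bb; auto).
    set (A1 := sum_f_R0 (fun n => beta n * y ^ n) N) in *.
    set (A2 := sum_f_R0 (fun n => beta n * x ^ n) N) in *.
    set (A3 := sum_f_R0 (fun n => rho n * beta n * y ^ n) N) in *.
    set (A4 := sum_f_R0 (fun n => rho n * beta n * x ^ n) N) in *.
    set (T := r * x ^ S N * A1 - r * y ^ S N * A2 - x ^ S N * A3 + y ^ S N * A4) in *.
    assert (Hid : (A4 + r * bb * x ^ S N) * (A1 + bb * y ^ S N) -
      (A3 + r * bb * y ^ S N) * (A2 + bb * x ^ S N) - (A4 * A1 - A3 * A2) = bb * T) by (unfold T; ring).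
    assert (bb * T <= 0) by (apply Rmult_le_0_l_compat_r || nra).
    lra. }
  assert (D1 : D 1%nat < 0).
  { unfold D, Sa, Sb. simpl.
    assert (0 < beta 0%nat) by auto. assert (0 < beta 1%nat) by auto.
    assert (0 < beta 0%nat * beta 1%nat) by (apply Rmult_lt_0_compat; auto).
    assert (0 < beta 0%nat * beta 1%nat * (y - x)) by (apply Rmult_lt_0_compat; lra).
    nra. }
  assert (Dle : forall N, D (S N) <= D 1%nat).
  { induction N; [lra|]. specialize (step (S N)). lra. }
  assert (Hlim : is_lim_seq (fun N => D (S N)) (PSeries (fun n => rho n * beta n) x * PSeries beta y - PSeries (fun n => rho n * beta n) y * PSeries beta x)).
  { apply (is_lim_seq_incr_1 D).
    unfold D. apply is_lim_seq_minus'; apply is_lim_seq_mult'; unfold Sa, Sb.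
    - apply (psum_lim (fun n => rho n * beta n)); auto.
    - apply psum_lim; auto.
    - apply (psum_lim (fun n => rho n * beta n)); auto.
    - apply psum_lim; auto. }
  assert (H := is_lim_seq_le _ _ _ _ Dle Hlim (is_lim_seq_const _)).
  simpl in H. lra.
Qed.

Lemma pos_mono (e : nat -> R) x y :
  (forall n, 0 <= e n) -> 0 < e 1%nat -> 0 <= x -> x < y ->
  ex_pseries e x -> ex_pseries e y -> PSeries e x < PSeries e y.
Proof.
  intros he he1 hx hxy e1 e2.
  set (E := fun N => sum_f_R0 (fun n => e n * y ^ n) N - sum_f_R0 (fun n => e n * x ^ n) N).
  assert (step : forall N, E N <= E (S N)).
  { intros N. unfold E. rewrite !tech5.
    assert (x ^ S N <= y ^ S N) by (apply pow_incr; lra).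
    assert (0 <= e (S N)) by auto.
    assert (0 <= e (S N) * (y ^ S N - x ^ S N)) by (apply Rmult_le_pos; lra).
    lra. }
  assert (E1 : 0 < E 1%nat).
  { unfold E. simpl. assert (0 < e 1%nat * (y - x)) by (apply Rmult_lt_0_compat; lra). nra. }
  assert (Ele : forall N, E 1%nat <= E (S N)).
  { induction N; [lra|]. specialize (step (S N)). lra. }
  assert (Hlim : is_lim_seq (fun N => E (S N)) (PSeries e y - PSeries e x)).
  { apply (is_lim_seq_incr_1 E). unfold E. apply is_lim_seq_minus'; apply psum_lim; auto. }
  assert (H := is_lim_seq_le _ _ _ _ Ele (is_lim_seq_const _) Hlim).
  simpl in H. lra.
Qed.

Definition ivl (P : R -> Prop) := forall u v w, P u -> P w -> u <= v -> v <= w -> P v.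

Lemma strict_conv_lt (P : R -> Prop) (g g' : R -> R) :
  ivl P -> (forall z, P z -> derivable_pt_lim g z (g' z)) ->
  (forall u v, P u -> P v -> u < v -> g' u < g' v) ->
  forall x y t, P x -> P y -> x < y -> 0 < t < 1 ->
  g (t * x + (1 - t) * y) < t * g x + (1 - t) * g y.
Proof.
  intros hP hd hm x y t px py hxy ht.
  set (z := t * x + (1 - t) * y).
  assert (hxz : x < z) by (unfold z; nra).
  assert (hzy : z < y) by (unfold z; nra).
  assert (pz : P z) by (apply (hP x z y); auto; lra).
  destruct (MVT_cor2 g g' x z hxz) as [k1 [E1 H1]].
  { intros c hc. apply hd. apply (hP x c z); tauto. }
  destruct (MVT_cor2 g g' z y hzy) as [k2 [E2 H2]].
  { intros c hc. apply hd. apply (hP z c y); tauto. }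
  assert (hk : g' k1 < g' k2).
  { apply hm; [apply (hP x k1 z) | apply (hP z k2 y) | ]; auto; lra. }
  assert (Ez1 : z - x = (1 - t) * (y - x)) by (unfold z; ring).
  assert (Ez2 : y - z = t * (y - x)) by (unfold z; ring).
  assert (0 < t * (1 - t) * (y - x) * (g' k2 - g' k1)).
  { repeat apply Rmult_lt_0_compat; lra. }
  rewrite Ez1 in E1. rewrite Ez2 in E2.
  nra.
Qed.

Lemma strict_conv (P : R -> Prop) (g g' : R -> R) :
  ivl P -> (forall z, P z -> derivable_pt_lim g z (g' z)) ->
  (forall u v, P u -> P v -> u < v -> g' u < g' v) ->
  forall x y t, P x -> P y -> x <> y -> 0 < t < 1 ->
  g (t * x + (1 - t) * y) < t * g x + (1 - t) * g y.
Proof.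
  intros hP hd hm x y t px py hxy ht.
  destruct (Rlt_or_le x y) as [h|h].
  - apply (strict_conv_lt P g g'); auto.
  - assert (hyx : y < x) by lra.
    assert (H := strict_conv_lt P g g' hP hd hm y x (1 - t) py px hyx ltac:(lra)).
    replace (t * x + (1 - t) * y) with ((1 - t) * y + (1 - (1 - t)) * x) by ring.
    lra.
Qed.

Lemma weak_conv (P : R -> Prop) (g g' : R -> R) :
  ivl P -> (forall z, P z -> derivable_pt_lim g z (g' z)) ->
  (forall u v, P u -> P v -> u < v -> g' u < g' v) ->
  forall x y t, P x -> P y -> 0 <= t <= 1 ->
  g (t * x + (1 - t) * y) <= t * g x + (1 - t) * g y.
Proof.
  intros hP hd hm x y t px py ht.
  destruct (Req_dec x y) as [e|ne].
  - subst y. replace (t * x + (1 - t) * x) with x by ring. lra.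
  - destruct (Req_dec t 0) as [e|n0].
    + subst t. replace (0 * x + (1 - 0) * y) with y by ring. lra.
    + destruct (Req_dec t 1) as [e|n1].
      * subst t. replace (1 * x + (1 - 1) * y) with x by ring. lra.
      * left. apply (strict_conv P g g'); auto. lra.
Qed.

Lemma strict_conc (P : R -> Prop) (g g' : R -> R) :
  ivl P -> (forall z, P z -> derivable_pt_lim g z (g' z)) ->
  (forall u v, P u -> P v -> u < v -> g' v < g' u) ->
  forall x y t, P x -> P y -> x <> y -> 0 < t < 1 ->
  t * g x + (1 - t) * g y < g (t * x + (1 - t) * y).
Proof.
  intros hP hd hm x y t px py hxy ht.
  assert (H := strict_conv P (fun z => - g z) (fun z => - g' z) hP
     ltac:(intros; apply derivable_pt_lim_opp; auto)
     ltac:(intros u v pu pv huv; specialize (hm u v pu pv huv); lra) x y t px py hxy ht).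
  simpl in H. lra.
Qed.

Lemma weak_conc (P : R -> Prop) (g g' : R -> R) :
  ivl P -> (forall z, P z -> derivable_pt_lim g z (g' z)) ->
  (forall u v, P u -> P v -> u < v -> g' v < g' u) ->
  forall x y t, P x -> P y -> 0 <= t <= 1 ->
  t * g x + (1 - t) * g y <= g (t * x + (1 - t) * y).
Proof.
  intros hP hd hm x y t px py ht.
  assert (H := weak_conv P (fun z => - g z) (fun z => - g' z) hP
     ltac:(intros; apply derivable_pt_lim_opp; auto)
     ltac:(intros u v pu pv huv; specialize (hm u v pu pv huv); lra) x y t px py ht).
  simpl in H. lra.
Qed.

Definition cf (a b : R) (n : nat) : R :=
  poch a n * poch b n / (poch (a + b) n * INR (Factorial.fact n)).

Lemma poch_pos a n : 0 < a -> 0 < poch a n.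
Proof.
  intros ha. induction n; simpl; [lra|].
  apply Rmult_lt_0_compat; auto. assert (0 <= INR n) by apply pos_INR. lra.
Qed.

Lemma cf_pos a b n : 0 < a -> 0 < b -> 0 < cf a b n.
Proof.
  intros ha hb. unfold cf.
  assert (0 < INR (Factorial.fact n)) by apply INR_fact_lt_0.
  assert (0 < poch (a+b) n) by (apply poch_pos; lra).
  apply Rdiv_lt_0_compat; apply Rmult_lt_0_compat; auto using poch_pos.
Qed.

Lemma cf_S a b n : 0 < a -> 0 < b ->
  cf a b (S n) = cf a b n * ((a + INR n) * (b + INR n)) / ((a + b + INR n) * INR (S n)).
Proof.
  intros ha hb. unfold cf. simpl poch.
  change (Factorial.fact (S n)) with (S n * Factorial.fact n)%nat.
  rewrite mult_INR.
  assert (0 < INR (Factorial.fact n)) by apply INR_fact_lt_0.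
  assert (0 < poch (a+b) n) by (apply poch_pos; lra).
  assert (0 < INR (S n)) by (apply lt_0_INR; lia).
  assert (0 <= INR n) by apply pos_INR.
  field. repeat split; lra.
Qed.

Lemma cf_0 a b : cf a b 0 = 1.
Proof. unfold cf. simpl. field. Qed.

Lemma lim_inv_S : is_lim_seq (fun n => / INR (S n)) 0.
Proof.
  apply (is_lim_seq_incr_1 (fun n => / INR n)).
  replace (Finite 0) with (Rbar_inv p_infty) by reflexivity.
  apply is_lim_seq_inv; [apply is_lim_seq_INR | discriminate].
Qed.

Lemma cf_radius a b : 0 < a -> 0 < b -> CV_radius (cf a b) = 1.
Proof.
  intros ha hb.
  replace (Finite 1) with (Finite (/ 1)) by (f_equal; field).
  apply CV_radius_finite_DAlembert.
  - intros n. apply Rgt_not_eq, cf_pos; auto.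
  - lra.
  - set (u := fun n => / INR (S n)).
    apply is_lim_seq_ext with (fun n => (1 + (a - 1) * u n) * (1 + (b - 1) * u n) / (1 + (a + b - 1) * u n)).
    + intros n. rewrite cf_S; auto.
      assert (0 < cf a b n) by (apply cf_pos; auto).
      assert (0 <= INR n) by apply pos_INR.
      assert (hS : INR (S n) = INR n + 1) by (rewrite S_INR; ring).
      unfold u. rewrite hS.
      rewrite Rabs_pos_eq.
      * field. repeat split; try lra.
      * apply Rmult_le_pos; [|apply Rlt_le, Rinv_0_lt_compat; lra].
        apply Rmult_le_pos; [|apply Rlt_le, Rinv_0_lt_compat; nra]. apply Rmult_le_pos; nra.
    + replace 1 with ((1 + (a - 1) * 0) * (1 + (b - 1) * 0) / (1 + (a + b - 1) * 0)) at 1 by field.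
      assert (Hu : forall k, is_lim_seq (fun n => 1 + k * u n) (1 + k * 0)).
      { intros k. apply is_lim_seq_plus'; [apply is_lim_seq_const|].
        apply (is_lim_seq_scal_l u k 0). apply lim_inv_S. }
      apply is_lim_seq_div'; [apply is_lim_seq_mult'; apply Hu | apply Hu | lra].
Qed.

Definition dd a b := PS_derive (cf a b).
Definition ee a b n := cf a b n / (a + b + INR n).
Definition rr a b n := (a + INR n) * (b + INR n) / (a + b + INR n).

Lemma dd_eq a b n : 0 < a -> 0 < b -> dd a b n = rr a b n * cf a b n.
Proof.
  intros ha hb. unfold dd, PS_derive, rr. rewrite cf_S; auto.
  assert (0 <= INR n) by apply pos_INR.
  assert (0 < INR (S n)) by (apply lt_0_INR; lia).
  field. lra.
Qed.

Lemma diff_eq a b n : 0 < a -> 0 < b ->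
  PS_minus (dd a b) (PS_incr_1 (dd a b)) n = a * b * ee a b n.
Proof.
  intros ha hb. unfold PS_minus, PS_incr_1, plus, opp; simpl.
  destruct n as [|m].
  - rewrite dd_eq; auto. unfold rr, ee. rewrite cf_0. simpl.
    unfold zero; simpl. field. lra.
  - rewrite dd_eq; auto. unfold dd at 1, PS_derive, rr, ee.
    assert (0 <= INR m) by apply pos_INR.
    rewrite !S_INR. field. lra.
Qed.

Lemma rr_incr a b n : 0 < a -> 0 < b -> rr a b n < rr a b (S n).
Proof.
  intros ha hb. unfold rr. rewrite S_INR.
  assert (0 <= INR n) by apply pos_INR.
  set (m := INR n) in *.
  assert (E1 : (a + m) * (b + m) / (a + b + m) = m + a * b / (a + b + m)) by (field; lra).
  assert (E2 : (a + (m + 1)) * (b + (m + 1)) / (a + b + (m + 1)) = m + 1 + a * b / (a + b + m + 1)) by (field; lra).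
  rewrite E1, E2.
  assert (E3 : a * b / (a + b + m) - a * b / (a + b + m + 1) = a * b / ((a + b + m) * (a + b + m + 1))) by (field; lra).
  assert (a * b < (a + b + m) * (a + b + m + 1)) by nra.
  assert (a * b / ((a + b + m) * (a + b + m + 1)) < 1).
  { apply Rmult_lt_reg_r with ((a + b + m) * (a + b + m + 1)); [nra|].
    unfold Rdiv. rewrite Rmult_assoc, Rinv_l; nra. }
  lra.
Qed.

Section S.
Variables a b : R.
Hypothesis ha : 0 < a.
Hypothesis hb : 0 < b.

Lemma in_rad x : -1 < x < 1 -> Rbar_lt (Rabs x) (CV_radius (cf a b)).
Proof. intros hx. rewrite cf_radius; auto. simpl. apply Rabs_def1; lra. Qed.

Lemma ex_cf x : -1 < x < 1 -> ex_pseries (cf a b) x.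
Proof. intros hx. apply CV_radius_inside, in_rad; auto. Qed.

Lemma ex_dd x : -1 < x < 1 -> ex_pseries (dd a b) x.
Proof. intros hx. apply ex_pseries_derive, in_rad; auto. Qed.

Lemma ex_ee x : -1 < x < 1 -> ex_pseries (ee a b) x.
Proof.
  intros hx.
  apply ex_pseries_ext with (PS_scal (/ (a * b)) (PS_minus (dd a b) (PS_incr_1 (dd a b)))).
  - intros n. unfold PS_scal at 1. unfold scal; simpl; unfold mult; simpl. rewrite diff_eq; auto.
    field. lra.
  - apply ex_pseries_scal; [unfold mult; simpl; ring|].
    apply ex_pseries_minus; [|apply ex_pseries_incr_1]; apply ex_dd; auto.
Qed.

Lemma key_id x : -1 < x < 1 -> (1 - x) * PSeries (dd a b) x = a * b * PSeries (ee a b) x.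
Proof.
  intros hx.
  assert (E1 : PSeries (fun n => a * b * ee a b n) x = a * b * PSeries (ee a b) x)
    by (rewrite <- PSeries_scal; apply PSeries_ext; intros; reflexivity).
  rewrite <- E1.
  rewrite <- (PSeries_ext _ _ x (fun n => diff_eq a b n ha hb)).
  rewrite PSeries_minus; [|apply ex_dd; auto|apply ex_pseries_incr_1, ex_dd; auto].
  rewrite PSeries_incr_1. ring.
Qed.

Lemma F_deriv x : -1 < x < 1 -> derivable_pt_lim (PSeries (cf a b)) x (PSeries (dd a b) x).
Proof. intros hx. apply is_derive_Reals. apply is_derive_PSeries, in_rad; auto. Qed.

Lemma F_gt1 x : 0 < x < 1 -> 1 < PSeries (cf a b) x.
Proof.
  intros hx. rewrite <- (cf_0 a b) at 1. rewrite <- PSeries_0.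
  apply pos_mono; try lra.
  - intros n. left. apply cf_pos; auto.
  - apply cf_pos; auto.
  - apply ex_cf; lra.
  - apply ex_cf; lra.
Qed.
End S.

Lemma div_lt_cross x y p q : 0 < p -> 0 < q -> x * q < y * p -> x / p < y / q.
Proof.
  intros hp hq h. apply Rmult_lt_reg_r with (p * q); [nra|].
  replace (x / p * (p * q)) with (x * q) by (field; lra).
  replace (y / q * (p * q)) with (y * p) by (field; lra). exact h.
Qed.

Lemma hpos t : 0 < t -> 0 < 1 - exp (- t) < 1.
Proof.
  intros ht. assert (exp (- t) < exp 0) by (apply exp_increasing; lra).
  rewrite exp_0 in H. assert (0 < exp (- t)) by apply exp_pos. lra.
Qed.

Lemma hmono u v : u < v -> 1 - exp (- u) < 1 - exp (- v).
Proof. intros h. assert (exp (- v) < exp (- u)) by (apply exp_increasing; lra). lra. Qed.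

Lemma dh t : derivable_pt_lim (fun t => 1 - exp (- t)) t (exp (- t)).
Proof. apply is_derive_Reals. auto_derive; auto. ring. Qed.

Section M.
Variables a b : R.
Hypothesis ha : 0 < a.
Hypothesis hb : 0 < b.
Let F := PSeries (cf a b).
Let F' := PSeries (dd a b).
Let K := PSeries (ee a b).

Lemma Fpos x : 0 < x < 1 -> 0 < F x.
Proof. intros hx. assert (H := F_gt1 a b ha hb x hx). unfold F. lra. Qed.

Lemma ee_pos n : 0 < ee a b n.
Proof.
  unfold ee. apply Rdiv_lt_0_compat; [apply cf_pos; auto|].
  assert (0 <= INR n) by apply pos_INR. lra.
Qed.

Lemma p1_deriv z : 0 < z < 1 -> derivable_pt_lim (fun x => ln (F x)) z (F' z / F z).
Proof.
  intros hz.
  assert (H := derivable_pt_lim_comp F ln z _ _ (F_deriv a b ha hb z ltac:(lra))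
                 (derivable_pt_lim_ln (F z) (Fpos z hz))).
  unfold comp in H. replace (F' z / F z) with (/ F z * PSeries (dd a b) z) by (unfold F', Rdiv; ring).
  exact H.
Qed.

Lemma p1_mono u v : 0 < u < 1 -> 0 < v < 1 -> u < v -> F' u / F u < F' v / F v.
Proof.
  intros hu hv huv.
  assert (R := ratio_lemma (rr a b) (cf a b) u v (fun n => cf_pos a b n ha hb)
     (fun n => Rlt_le _ _ (rr_incr a b n ha hb)) (rr_incr a b 0 ha hb) ltac:(lra) huv
     (ex_cf a b ha hb u ltac:(lra)) (ex_cf a b ha hb v ltac:(lra))
     (ex_pseries_ext _ _ u (fun n => dd_eq a b n ha hb) (ex_dd a b ha hb u ltac:(lra)))
     (ex_pseries_ext _ _ v (fun n => dd_eq a b n ha hb) (ex_dd a b ha hb v ltac:(lra)))).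
  rewrite <- !(PSeries_ext _ _ _ (fun n => dd_eq a b n ha hb)) in R.
  apply div_lt_cross; try apply Fpos; auto.
Qed.

Lemma p2_deriv t : 0 < t -> derivable_pt_lim (fun t => ln (F (1 - exp (- t)))) t
   (a * b * K (1 - exp (- t)) / F (1 - exp (- t))).
Proof.
  intros ht. assert (hh := hpos t ht).
  assert (H1 := derivable_pt_lim_comp _ F t _ _ (dh t) (F_deriv a b ha hb (1 - exp (- t)) ltac:(lra))).
  assert (H2 := derivable_pt_lim_comp _ ln t _ _ H1 (derivable_pt_lim_ln _ (Fpos _ hh))).
  unfold comp in H2.
  replace (a * b * K (1 - exp (- t)) / F (1 - exp (- t))) with
    (/ F (1 - exp (- t)) * (PSeries (dd a b) (1 - exp (- t)) * exp (- t))).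
  - exact H2.
  - unfold K. rewrite <- key_id; auto; [|lra].
    replace (1 - (1 - exp (- t))) with (exp (- t)) by ring. unfold Rdiv. ring.
Qed.

Lemma p2_mono u v : 0 < u -> 0 < v -> u < v ->
  a * b * K (1 - exp (- v)) / F (1 - exp (- v)) < a * b * K (1 - exp (- u)) / F (1 - exp (- u)).
Proof.
  intros hu hv huv.
  assert (hu' := hpos u hu). assert (hv' := hpos v hv). assert (hm := hmono u v huv).
  set (x := 1 - exp (- u)) in *. set (y := 1 - exp (- v)) in *.
  assert (Hext : forall n, (a + b + INR n) * ee a b n = cf a b n).
  { intros n. unfold ee. assert (0 <= INR n) by apply pos_INR. field. lra. }
  assert (R := ratio_lemma (fun n => a + b + INR n) (ee a b) x y ee_pos
     ltac:(intros n; cbv beta; rewrite S_INR; lra) ltac:(cbv beta; rewrite S_INR; simpl; lra) ltac:(lra) hm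
     (ex_ee a b ha hb x ltac:(lra)) (ex_ee a b ha hb y ltac:(lra))
     (ex_pseries_ext _ _ x (fun n => eq_sym (Hext n)) (ex_cf a b ha hb x ltac:(lra)))
     (ex_pseries_ext _ _ y (fun n => eq_sym (Hext n)) (ex_cf a b ha hb y ltac:(lra)))).
  rewrite !(PSeries_ext _ _ _ Hext) in R.
  apply div_lt_cross; try apply Fpos; auto.
  fold F K in R. assert (0 < a * b) by nra. nra.
Qed.

Lemma p3_deriv t : 0 < t -> derivable_pt_lim (fun t => F (1 - exp (- t))) t
   (a * b * K (1 - exp (- t))).
Proof.
  intros ht. assert (hh := hpos t ht).
  assert (H1 := derivable_pt_lim_comp _ F t _ _ (dh t) (F_deriv a b ha hb (1 - exp (- t)) ltac:(lra))).
  unfold comp in H1.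
  replace (a * b * K (1 - exp (- t))) with (PSeries (dd a b) (1 - exp (- t)) * exp (- t)).
  - exact H1.
  - unfold K. rewrite <- key_id; auto; [|lra]. ring.
Qed.

Lemma p3_mono u v : 0 < u -> 0 < v -> u < v ->
  a * b * K (1 - exp (- u)) < a * b * K (1 - exp (- v)).
Proof.
  intros hu hv huv.
  assert (hu' := hpos u hu). assert (hv' := hpos v hv). assert (hm := hmono u v huv).
  assert (K (1 - exp (- u)) < K (1 - exp (- v))).
  { apply pos_mono; [intros n; left; apply ee_pos | apply ee_pos | lra | lra | apply ex_ee; auto; lra | apply ex_ee; auto; lra]. }
  assert (0 < a * b) by nra. nra.
Qed.

Definition P1 z := 0 < z < 1.
Definition P2 z := 0 < z.
Lemma ivl1 : ivl P1. Proof. intros u v w; unfold P1; lra. Qed.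
Lemma ivl2 : ivl P2. Proof. intros u v w; unfold P2; lra. Qed.

Lemma part1 : convex_on (fun x => ln (F x)) (Finite 0) (Finite 1).
Proof.
  intros x y t h1 h2 h3 h4 ht.
  destruct x as [x| |]; try (simpl in *; tauto); destruct y as [y| |]; try (simpl in *; tauto). simpl in h1, h2, h3, h4.
  apply (weak_conv P1 (fun x => ln (F x)) (fun z => F' z / F z) ivl1); unfold P1; auto.
  - intros; apply p1_deriv; auto.
  - intros; apply p1_mono; auto.
Qed.

Lemma part2 : concave_on (fun t => ln (F (1 - exp (- t)))) (Finite 0) p_infty.
Proof.
  intros x y t h1 h2 h3 h4 ht.
  destruct x as [x| |]; try (simpl in *; tauto); destruct y as [y| |]; try (simpl in *; tauto). simpl in h1, h2, h3, h4.
  apply (weak_conc P2 (fun t => ln (F (1 - exp (- t)))) (fun t => a * b * K (1 - exp (- t)) / F (1 - exp (- t))) ivl2); unfold P2; auto.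
  - intros; apply p2_deriv; auto.
  - intros; apply p2_mono; auto.
Qed.

Lemma part3 : convex_on (fun t => F (1 - exp (- t))) (Finite 0) p_infty.
Proof.
  intros x y t h1 h2 h3 h4 ht.
  destruct x as [x| |]; try (simpl in *; tauto); destruct y as [y| |]; try (simpl in *; tauto). simpl in h1, h2, h3, h4.
  apply (weak_conv P2 (fun t => F (1 - exp (- t))) (fun t => a * b * K (1 - exp (- t))) ivl2); unfold P2; auto.
  - intros; apply p3_deriv; auto.
  - intros; apply p3_mono; auto.
Qed.

End M.

Lemma L_sq p q r : 0 < p -> 0 < q -> 0 < r -> 2 * ln r < ln p + ln q -> r < sqrt (p * q).
Proof.
  intros hp hq hr h. rewrite <- ln_mult in h; auto.
  replace (2 * ln r) with (ln (r * r)) in h by (rewrite ln_mult; auto; ring).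
  apply ln_lt_inv in h; try nra.
  rewrite <- (sqrt_square r) at 1; [|lra]. apply sqrt_lt_1_alt. nra.
Qed.

Lemma L_sq2 p q r : 0 < p -> 0 < q -> 0 < r -> ln p + ln q < 2 * ln r -> sqrt (p * q) < r.
Proof.
  intros hp hq hr h. rewrite <- ln_mult in h; auto.
  replace (2 * ln r) with (ln (r * r)) in h by (rewrite ln_mult; auto; ring).
  apply ln_lt_inv in h; try nra.
  rewrite <- (sqrt_square r); [|lra]. apply sqrt_lt_1_alt. nra.
Qed.

Lemma exp_half p q : 0 < p -> 0 < q -> exp (/ 2 * ln p + (1 - / 2) * ln q) = sqrt (p * q).
Proof.
  intros hp hq. set (s := exp (/ 2 * ln p + (1 - / 2) * ln q)).
  assert (hs : 0 < s) by apply exp_pos.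
  assert (s * s = p * q).
  { unfold s. rewrite <- exp_plus.
    replace (/ 2 * ln p + (1 - / 2) * ln q + (/ 2 * ln p + (1 - / 2) * ln q)) with (ln p + ln q) by field.
    rewrite exp_plus, !exp_ln; auto. }
  rewrite <- H. rewrite sqrt_square; lra.
Qed.

Section N.
Variables a b : R.
Hypothesis ha : 0 < a.
Hypothesis hb : 0 < b.
Let F := PSeries (cf a b).
Let F' := PSeries (dd a b).
Let K := PSeries (ee a b).

Lemma tpos x : 0 < x < 1 -> 0 < - ln (1 - x).
Proof. intros hx. assert (ln (1 - x) < ln 1) by (apply ln_increasing; lra). rewrite ln_1 in H. lra. Qed.

Lemma tinv x : 0 < x < 1 -> 1 - exp (- - ln (1 - x)) = x.
Proof. intros hx. rewrite Ropp_involutive, exp_ln; lra. Qed.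

Lemma strict_all x y : 0 < x < 1 -> 0 < y < 1 -> x <> y ->
  F ((x + y) / 2) < sqrt (F x * F y) /\
  sqrt (F x * F y) < F (1 - sqrt ((1 - x) * (1 - y))) /\
  F (1 - sqrt ((1 - x) * (1 - y))) < (F x + F y) / 2.
Proof.
  intros hx hy hxy.
  assert (Fx := Fpos a b ha hb x hx). assert (Fy := Fpos a b ha hb y hy).
  fold F in Fx, Fy.
  set (t1 := - ln (1 - x)). set (t2 := - ln (1 - y)).
  assert (ht1 : 0 < t1) by (apply tpos; auto). assert (ht2 : 0 < t2) by (apply tpos; auto).
  assert (e1 : 1 - exp (- t1) = x) by (apply tinv; auto).
  assert (e2 : 1 - exp (- t2) = y) by (apply tinv; auto).
  assert (hne : t1 <> t2) by (intros E; apply hxy; rewrite <- e1, <- e2, E; reflexivity).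
  assert (em : 1 - exp (- (/ 2 * t1 + (1 - / 2) * t2)) = 1 - sqrt ((1 - x) * (1 - y))).
  { rewrite <- exp_half by lra. unfold t1, t2. f_equal. f_equal. ring. }
  assert (hm : 0 < 1 - sqrt ((1 - x) * (1 - y)) < 1).
  { rewrite <- em. apply hpos. lra. }
  assert (Fm := Fpos a b ha hb _ hm). fold F in Fm.
  assert (hm1 : 0 < (x + y) / 2 < 1) by lra.
  assert (Fm1 := Fpos a b ha hb _ hm1). fold F in Fm1.
  split; [|split].
  - assert (S := strict_conv P1 (fun x => ln (F x)) (fun z => F' z / F z) ivl1
       (fun z hz => p1_deriv a b ha hb z hz) (fun u v hu hv huv => p1_mono a b ha hb u v hu hv huv)
       x y (/ 2) hx hy hxy ltac:(lra)).
    cbv beta in S. replace (/ 2 * x + (1 - / 2) * y) with ((x + y) / 2) in S by field.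
    apply L_sq; auto. lra.
  - assert (S := strict_conc P2 (fun t => ln (F (1 - exp (- t)))) _ ivl2
       (fun z hz => p2_deriv a b ha hb z hz) (fun u v hu hv huv => p2_mono a b ha hb u v hu hv huv)
       t1 t2 (/ 2) ht1 ht2 hne ltac:(lra)).
    cbv beta in S. rewrite e1, e2, em in S.
    apply L_sq2; auto. lra.
  - assert (S := strict_conv P2 (fun t => F (1 - exp (- t))) _ ivl2
       (fun z hz => p3_deriv a b ha hb z hz) (fun u v hu hv huv => p3_mono a b ha hb u v hu hv huv)
       t1 t2 (/ 2) ht1 ht2 hne ltac:(lra)).
    cbv beta in S. rewrite e1, e2, em in S. lra.
Qed.

Lemma eq_all x : 0 < x < 1 ->
  F ((x + x) / 2) = sqrt (F x * F x) /\
  sqrt (F x * F x) = F (1 - sqrt ((1 - x) * (1 - x))) /\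
  F (1 - sqrt ((1 - x) * (1 - x))) = (F x + F x) / 2.
Proof.
  intros hx. assert (Fx := Fpos a b ha hb x hx). fold F in Fx.
  rewrite sqrt_square by lra. rewrite sqrt_square by lra.
  replace ((x + x) / 2) with x by field. replace (1 - (1 - x)) with x by ring.
  repeat split; field.
Qed.

Lemma final x y : 0 < x < 1 -> 0 < y < 1 ->
     F ((x + y) / 2) <= sqrt (F x * F y) /\
     sqrt (F x * F y) <= F (1 - sqrt ((1 - x) * (1 - y))) /\
     F (1 - sqrt ((1 - x) * (1 - y))) <= (F x + F y) / 2 /\
     (F ((x + y) / 2) = sqrt (F x * F y) <-> x = y) /\
     (sqrt (F x * F y) = F (1 - sqrt ((1 - x) * (1 - y))) <-> x = y) /\
     (F (1 - sqrt ((1 - x) * (1 - y))) = (F x + F y) / 2 <-> x = y).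
Proof.
  intros hx hy. destruct (Req_dec x y) as [e|ne].
  - subst y. destruct (eq_all x hx) as [A1 [A2 A3]].
    repeat split; try lra; auto.
  - destruct (strict_all x y hx hy ne) as [A1 [A2 A3]].
    repeat split; try lra; intros E; exfalso; try lra; apply ne; exact E.
Qed.
End N.

Theorem theorem3p2 (a b : R) (ha : 0 < a) (hb : 0 < b) :
  let c := a + b in
  let F := fun x => hyp2F1 a b c x in
  convex_on (fun x => ln (F x)) (Finite 0) (Finite 1) /\
  concave_on (fun t => ln (F (1 - exp (- t)))) (Finite 0) p_infty /\
  convex_on (fun t => F (1 - exp (- t))) (Finite 0) p_infty /\
  (forall x y, 0 < x < 1 -> 0 < y < 1 ->
     F ((x + y) / 2) <= sqrt (F x * F y) /\
     sqrt (F x * F y) <= F (1 - sqrt ((1 - x) * (1 - y))) /\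
     F (1 - sqrt ((1 - x) * (1 - y))) <= (F x + F y) / 2 /\
     (F ((x + y) / 2) = sqrt (F x * F y) <-> x = y) /\
     (sqrt (F x * F y) = F (1 - sqrt ((1 - x) * (1 - y))) <-> x = y) /\
     (F (1 - sqrt ((1 - x) * (1 - y))) = (F x + F y) / 2 <-> x = y)).
Proof.
  intros c F.
  split; [exact (part1 a b ha hb)|].
  split; [exact (part2 a b ha hb)|].
  split; [exact (part3 a b ha hb)|].
  exact (final a b ha hb).
Qed.
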